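(* Let $\mu>0$ and $\hbar>0$ be constants, and let $V:\mathbb{R}\to\mathbb{R}$ be a separable potential, i.e. there exist continuous real-valued functions $F$ and $G$ of one real variable such that $V\left(\frac{u+v}{2}\right)-V\left(\frac{u-v}{2}\right)=F(u)\,G(v)$ for all real $u,v$. Define, for real $u,u',v,v'$, $$\tilde{G}(v,v')=\int_{v'}^{v}G(v'')\,dv'',\qquad \tilde{F}(u,u')=\int_{u'}^{u}F(u'')\,du'',$$ and $$T_S(u,v)=\frac{u}{4}+\frac{\mu}{2\hbar^2}\int_{0}^{v}dv'\,G(v')\int_{0}^{u}du'\,F(u')\,\frac{u'}{4}\;{}_0F_1\!\left(;1;\frac{\mu}{2\hbar^2}\,\tilde{G}(v,v')\,\tilde{F}(u,u')\right).$$ Then $T_S$ satisfies the integral equation $$T_S(u,v)=\frac{u}{4}+\frac{\mu}{2\hbar^2}\int_{0}^{u}du'\int_{0}^{v}dv'\,F(u')\,G(v')\,T_S(u',v'),$$ and consequently the time kernel equation $$-\frac{2\hbar^2}{\mu}\frac{\partial^2 T_S(u,v)}{\partial u\,\partial v}+\left(V\left(\frac{u+v}{2}\right)-V\left(\frac{u-v}{2}\right)\right)T_S(u,v)=0$$ together with the boundary conditions $T_S(u,0)=u/4$ and $T_S(0,v)=0$.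
   Context: ${}_0F_1(;b;z)=\sum_{k=0}^{\infty}\frac{z^k}{(b)_k\,k!}$ denotes the confluent hypergeometric limit function, where $(b)_k$ is the Pochhammer symbol; in particular ${}_0F_1(;1;z)=\sum_{k\ge 0} z^k/(k!)^2$. The coordinates $u=q+q'$, $v=q-q'$ are the canonical coordinates in which the time kernel equation is written. *)

(* Defs.v *)
From Stdlib Require Import Reals Factorial.
From Coquelicot Require Import Coquelicot.
Open Scope R_scope.

Fixpoint pochhammer (b : R) (k : nat) : R :=
  match k with
  | O => 1
  | S k' => pochhammer b k' * (b + INR k')
  end.

Definition hyp0F1 (b z : R) : R :=
  Series (fun k => z ^ k / (pochhammer b k * INR (fact k))).

Definition tildeI (F : R -> R) (u u' : R) : R := RInt F u' u.

Definition T_S (mu hbar : R) (F G : R -> R) (u v : R) : R :=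
  u / 4 + mu / (2 * hbar ^ 2) *
    RInt (fun v' => G v' *
      RInt (fun u' => F u' * (u' / 4) *
              hyp0F1 1 (mu / (2 * hbar ^ 2) * tildeI G v v' * tildeI F u u'))
           0 u) 0 v.

(* Main.v *)
Require Import Defs.
From Stdlib Require Import Reals Lra Lia FunctionalExtensionality Factorial.
From Coquelicot Require Import Coquelicot.
Open Scope R_scope.

Definition bnd (fn : nat -> R -> R) :=
  forall r, 0 <= r -> exists M : nat -> R, ex_series M /\
     forall k x, Rabs x <= r -> Rabs (fn k x) <= M k.

Lemma cont_pt_of (f : R -> R) x : continuous f x -> continuity_pt f x.
Proof. intros H. apply continuity_pt_filterlim. exact H. Qed.

Lemma cont_of_pt (f : R -> R) x : continuity_pt f x -> continuous f x.
Proof. intros H. apply continuity_pt_filterlim. exact H. Qed.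

Lemma bnd_pos (fn : nat -> R -> R) (r : R) (M : nat -> R) : 0 <= r -> (forall k x, Rabs x <= r -> Rabs (fn k x) <= M k) ->
  forall k, 0 <= M k.
Proof.
  intros Hr H k. specialize (H k 0). rewrite Rabs_R0 in H.
  specialize (H Hr). pose proof (Rabs_pos (fn k 0)). lra.
Qed.

Lemma S_cvu fn (Hb : bnd fn) x :
  exists e : posreal, CVU (fun n => SP fn n) (fun y => Series (fun k => fn k y)) x e.
Proof.
  assert (Hr : 0 < Rabs x + 1) by (pose proof (Rabs_pos x); lra).
  destruct (Hb (Rabs x + 1) (Rlt_le _ _ Hr)) as [M [HM HMb]].
  pose (r := mkposreal _ Hr).
  assert (Mp := bnd_pos fn _ M (Rlt_le _ _ Hr) HMb).
  assert (Hcv : CVN_r fn r).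
  { exists M. exists (Series M). split.
    - assert (HS := Series_correct M HM).
      apply is_series_Reals in HS.
      intros eps Heps. destruct (HS eps Heps) as [N HN]. exists N. intros n Hn.
      specialize (HN n Hn). unfold R_dist in *.
      replace (sum_f_R0 (fun k => Rabs (M k)) n) with (sum_f_R0 M n); [exact HN|].
      apply sum_eq. intros i _. rewrite Rabs_pos_eq; auto.
    - intros n y Hy. apply HMb. unfold Boule in Hy. simpl in Hy.
      rewrite Rminus_0_r in Hy. lra. }
  apply (CVN_CVU_r fn r Hcv). simpl. lra.
Qed.

Lemma S_ex fn (Hb : bnd fn) y : ex_series (fun k => fn k y).
Proof.
  destruct (Hb (Rabs y) (Rabs_pos y)) as [M [HM HMb]].
  apply (ex_series_le (K := R_AbsRing) (V := R_CompleteNormedModule) _ M); auto.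
  intros n. apply HMb. lra.
Qed.

Lemma S_cont fn (Hc : forall k x, continuous (fn k) x) (Hb : bnd fn) x :
  continuous (fun y => Series (fun k => fn k y)) x.
Proof.
  destruct (S_cvu fn Hb x) as [e He].
  apply cont_of_pt.
  apply (CVU_continuity (fun n => SP fn n) _ x e He).
  - intros n y _. induction n.
    + unfold SP. simpl. apply cont_pt_of, Hc.
    + unfold SP in *. simpl.
      apply (continuity_pt_plus (fun y => sum_f_R0 (fun k => fn k y) n) (fn (S n))); auto.
      apply cont_pt_of, Hc.
  - unfold Boule. rewrite Rminus_diag, Rabs_R0. apply cond_pos.
Qed.

Lemma SP_derive fn dfn (Hd : forall k x, is_derive (fn k) x (dfn k x)) n y :
  is_derive (SP fn n) y (SP dfn n y).
Proof.
  induction n.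
  - unfold SP; simpl. apply Hd.
  - unfold SP in *; simpl. apply (is_derive_plus (fun y => sum_f_R0 (fun k => fn k y) n) (fn (S n))); auto.
Qed.

Lemma S_deriv fn dfn (Hd : forall k x, is_derive (fn k) x (dfn k x))
  (Hc : forall k x, continuous (dfn k) x) (Hb : bnd fn) (Hbd : bnd dfn) x :
  is_derive (fun y => Series (fun k => fn k y)) x (Series (fun k => dfn k x)).
Proof.
  destruct (S_cvu dfn Hbd x) as [e He].
  apply is_derive_Reals.
  apply (Ranalysis5.derivable_pt_lim_CVU (fun n => SP fn n) (fun n => SP dfn n)
     (fun y => Series (fun k => fn k y)) (fun y => Series (fun k => dfn k y)) x x e).
  - unfold Boule. rewrite Rminus_diag, Rabs_R0. apply cond_pos.
  - intros y n _. apply is_derive_Reals. apply SP_derive; auto.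
  - intros y _. assert (HS := Series_correct _ (S_ex fn Hb y)).
    apply is_series_Reals in HS. exact HS.
  - exact He.
  - intros y _. apply cont_pt_of. apply S_cont; auto.
Qed.

Lemma between_abs a x t r : Rabs x <= r -> Rmin a x <= t <= Rmax a x -> Rabs t <= r + Rabs a.
Proof. intros H1 H2. unfold Rmin, Rmax in H2. destruct (Rle_dec a x); split_Rabs; lra. Qed.

Lemma RInt_abs_bound (f : R -> R) a x M :
  (forall t, Rmin a x <= t <= Rmax a x -> continuous f t) ->
  (forall t, Rmin a x <= t <= Rmax a x -> Rabs (f t) <= M) ->
  Rabs (RInt f a x) <= Rabs (x - a) * M.
Proof.
  intros Hc Hb. destruct (Rle_dec a x) as [H|H].
  - rewrite (Rabs_pos_eq (x - a)) by lra.
    apply abs_RInt_le_const; auto.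
    + apply (ex_RInt_continuous (V := R_CompleteNormedModule)); auto.
    + intros t Ht. apply Hb. rewrite Rmin_left, Rmax_right; lra.
  - rewrite <- opp_RInt_swap. 2:{ apply (ex_RInt_continuous (V := R_CompleteNormedModule)).
      intros; apply Hc. rewrite Rmin_comm, Rmax_comm; auto. }
    unfold opp; simpl. rewrite Rabs_Ropp.
    rewrite (Rabs_left (x - a)) by lra. replace (- (x - a)) with (a - x) by ring.
    apply abs_RInt_le_const; try lra.
    + apply (ex_RInt_continuous (V := R_CompleteNormedModule)). intros; apply Hc. rewrite Rmin_comm, Rmax_comm; auto.
    + intros t Ht. apply Hb. rewrite Rmin_right, Rmax_left; lra.
Qed.

Lemma Series_zero : Series (fun _ => 0) = 0.
Proof. transitivity (Series (fun n => 0 * (fun _ => 0) n)).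
  - apply Series_ext; intros; ring.
  - rewrite Series_scal_l. ring. Qed.

Lemma S_int (fn : nat -> R -> R) (Hc : forall k x, continuous (fn k) x) (Hb : bnd fn) a b :
  RInt (fun x => Series (fun k => fn k x)) a b = Series (fun k => RInt (fn k) a b).
Proof.
  pose (g := fun k x => RInt (fn k) a x).
  assert (Hg : forall k x, is_derive (g k) x (fn k x)).
  { intros k x. apply (is_derive_RInt (fn k) (g k) a x).
    - apply filter_forall. intros y. apply (RInt_correct (V := R_CompleteNormedModule)). apply (ex_RInt_continuous (V := R_CompleteNormedModule)). auto.
    - auto. }
  assert (Hbg : bnd g).
  { intros r Hr. destruct (Hb (r + Rabs a)) as [M [HM HMb]].
    { pose proof (Rabs_pos a); lra. }
    assert (Mp := bnd_pos fn (r + Rabs a) M ltac:(pose proof (Rabs_pos a); lra) HMb).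
    exists (fun k => (r + Rabs a) * M k). split.
    - apply (ex_series_scal_l (V := R_NormedModule)); auto.
    - intros k x Hx. unfold g. eapply Rle_trans.
      + apply RInt_abs_bound. intros; auto.
        intros t Ht. apply HMb. apply (between_abs a x t r); auto.
      + apply Rmult_le_compat_r; auto.
        eapply Rle_trans; [apply Rabs_triang|]. rewrite Rabs_Ropp. lra. }
  assert (HD := fun x => S_deriv g fn Hg Hc Hbg Hb x).
  assert (HI : is_RInt (fun x => Series (fun k => fn k x)) a b
      (minus (Series (fun k => g k b)) (Series (fun k => g k a)))).
  { apply (is_RInt_derive (fun y => Series (fun k => g k y))).
    - intros; apply HD.
    - intros; apply S_cont; auto. }
  apply (is_RInt_unique (V := R_CompleteNormedModule)) in HI. rewrite HI.
  unfold g. replace (Series (fun k => RInt (fn k) a a)) with 0.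
  - unfold minus, plus, opp; simpl. ring.
  - rewrite <- (Series_zero). apply Series_ext. intros; rewrite RInt_point; auto.
Qed.

Lemma cmul (f g : R -> R) x : continuous f x -> continuous g x -> continuous (fun y => f y * g y) x.
Proof. intros H1 H2. exact (continuous_mult f g x H1 H2). Qed.
Lemma cplus (f g : R -> R) x : continuous f x -> continuous g x -> continuous (fun y => f y + g y) x.
Proof. intros H1 H2. exact (continuous_plus f g x H1 H2). Qed.
Lemma copp (f : R -> R) x : continuous f x -> continuous (fun y => - f y) x.
Proof. intros H1. exact (continuous_opp f x H1). Qed.
Lemma cminus (f g : R -> R) x : continuous f x -> continuous g x -> continuous (fun y => f y - g y) x.
Proof. intros H1 H2. apply cplus; auto. apply copp; auto. Qed.
Lemma cconst (a : R) x : continuous (fun _ : R => a) x.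
Proof. exact (continuous_const a x). Qed.
Lemma cid x : continuous (fun y : R => y) x.
Proof. exact (continuous_id x). Qed.
Lemma cpow (f : R -> R) k x : continuous f x -> continuous (fun y => f y ^ k) x.
Proof. intros H. induction k; simpl. apply cconst. apply cmul; auto. Qed.

Lemma cont_bound (f : R -> R) : (forall x, continuous f x) ->
  forall r, 0 <= r -> exists M, 0 <= M /\ forall x, Rabs x <= r -> Rabs (f x) <= M.
Proof.
  intros Hf r Hr.
  destruct (continuity_ab_maj (fun x => Rabs (f x)) (-r) r) as [m [Hm1 Hm2]].
  - lra.
  - intros c _. apply cont_pt_of.
    apply (continuous_comp f Rabs). auto. apply continuous_Rabs.
  - exists (Rabs (f m)). split. apply Rabs_pos.
    intros x Hx. apply Hm1. split_Rabs; lra.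
Qed.

Lemma fact_pos' k : 1 <= INR (fact k).
Proof. apply (le_INR 1). apply lt_O_fact. Qed.

Lemma ex_exp K X : ex_series (fun k => K * (X ^ k / INR (fact k))).
Proof.
  apply (ex_series_scal_l (V := R_NormedModule)).
  exists (exp X). assert (H := is_exp_Reals X). unfold is_pseries in H.
  eapply is_series_ext; [|exact H]. intros n. simpl. rewrite pow_n_pow.
  unfold scal; simpl; unfold mult; simpl. unfold Rdiv. ring.
Qed.

Lemma pow_abs_le x X k : Rabs x <= X -> Rabs (x ^ k) <= X ^ k.
Proof. intros H. rewrite <- RPow_abs. apply pow_incr. split; auto. apply Rabs_pos. Qed.

Lemma poch1 k : pochhammer 1 k = INR (fact k).
Proof. induction k; simpl pochhammer. simpl; auto.
  rewrite IHk. rewrite fact_simpl, mult_INR, S_INR. ring. Qed.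

Lemma cdivc (f : R -> R) c x : continuous f x -> continuous (fun y => f y / c) x.
Proof. intros H. apply (cmul f (fun _ => / c)); auto. apply cconst. Qed.

Ltac cont_step := match goal with
 | |- continuous (fun _ => ?c) _ => apply cconst
 | |- continuous (fun y => y) _ => apply cid
 | |- continuous (fun y => @?f y * @?g y) _ => apply (cmul f g)
 | |- continuous (fun y => @?f y - @?g y) _ => apply (cminus f g)
 | |- continuous (fun y => @?f y + @?g y) _ => apply (cplus f g)
 | |- continuous (fun y => - @?f y) _ => apply (copp f)
 | |- continuous (fun y => @?f y / ?c) _ => apply (cdivc f c)
 | |- continuous (fun y => @?f y ^ ?k) _ => apply (cpow f k)
 end.
Ltac cont := repeat cont_step.

Lemma isd_eq (f : R -> R) x l l' : is_derive f x l -> l = l' -> is_derive f x l'.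
Proof. intros H <-; exact H. Qed.

Lemma exRI (f : R -> R) a b : (forall x, continuous f x) -> ex_RInt f a b.
Proof. intros H. apply (ex_RInt_continuous (V := R_CompleteNormedModule)). auto. Qed.

Definition Aint (F : R -> R) (u : R) : R := RInt F 0 u.

Section WithF.
Variable F : R -> R.
Hypothesis HF : forall x, continuous F x.

Lemma A_deriv x : is_derive (Aint F) x (F x).
Proof.
  apply (is_derive_RInt F (Aint F) 0 x).
  - apply filter_forall. intros y. apply (RInt_correct (V := R_CompleteNormedModule)). apply exRI; auto.
  - auto.
Qed.

Lemma A_cont x : continuous (Aint F) x.
Proof. apply (ex_derive_continuous (K := R_AbsRing) (V := R_NormedModule)). eexists. apply A_deriv. Qed.

Lemma A_diff x y : RInt F y x = Aint F x - Aint F y.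
Proof.
  unfold Aint. pose proof (RInt_Chasles (V := R_CompleteNormedModule) F 0 y x (exRI _ _ _ HF) (exRI _ _ _ HF)) as E.
  unfold plus in E; simpl in E.
  assert (E' : forall a b c : R, a + b = c -> b = c - a) by (intros; subst; ring).
  apply E'. exact E.
Qed.

Definition Pk (k : nat) (u : R) : R := RInt (fun t => F t * (t/4) * (Aint F u - Aint F t)^k) 0 u.

Lemma P0_deriv x : is_derive (Pk 0) x (F x * (x/4)).
Proof.
  eapply isd_eq.
  - apply (is_derive_RInt (fun t => F t * (t/4) * 1) (Pk 0) 0 x).
    + apply filter_forall. intros y. apply (RInt_correct (V := R_CompleteNormedModule)). apply exRI.
      intros; cont; auto.
    + cont; auto.
  - simpl. ring.
Qed.

Lemma c2_1 (g : R -> R) x y : continuity_pt g x -> continuity_2d_pt (fun u v => g u) x y.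
Proof. intros H. apply (continuity_1d_2d_pt_comp g (fun u v => u)); auto. apply continuity_2d_pt_id1. Qed.
Lemma c2_2 (g : R -> R) x y : continuity_pt g y -> continuity_2d_pt (fun u v => g v) x y.
Proof. intros H. apply (continuity_1d_2d_pt_comp g (fun u v => v)); auto. apply continuity_2d_pt_id2. Qed.
Lemma c2_pow (g : R -> R -> R) k x y : continuity_2d_pt g x y -> continuity_2d_pt (fun u v => g u v ^ k) x y.
Proof. intros H. apply (continuity_1d_2d_pt_comp (fun z => z ^ k) g); auto.
  apply cont_pt_of. apply cpow. apply cid. Qed.

Lemma PS_deriv k x : is_derive (Pk (S k)) x (INR (S k) * F x * Pk k x).
Proof.
  pose (f := fun u t => F t * (t/4) * (Aint F u - Aint F t)^(S k)).
  pose (d := fun u t => F t * (t/4) * (INR (S k) * 1 * (Aint F u - Aint F t)^k * F u)).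
  assert (Hfd : forall u t, is_derive (fun z => f z t) u (d u t)).
  { intros u t. unfold f, d.
    apply (is_derive_scal (fun z => (Aint F z - Aint F t)^(S k))).
    eapply isd_eq.
    - apply (is_derive_pow (fun z => Aint F z - Aint F t) (S k) u (F u - 0)).
      apply (is_derive_minus (Aint F) (fun _ => Aint F t)). apply A_deriv. apply (is_derive_const (K := R_AbsRing) (V := R_NormedModule)).
    - simpl. ring. }
  assert (HD : forall u t, Derive (fun z => f z t) u = d u t).
  { intros; apply is_derive_unique; auto. }
  assert (Hfc : forall u x, continuous (fun t => f u t) x).
  { intros u y. unfold f. cont; try apply A_cont; auto. }
  assert (Hd2 : forall u t, continuity_2d_pt (fun u v => Derive (fun z => f z v) u) u t).
  { intros u t. apply (continuity_2d_pt_ext d). intros; rewrite HD; auto.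
    unfold d. repeat apply continuity_2d_pt_mult.
    all: first [apply continuity_2d_pt_const | apply continuity_2d_pt_id2 | apply continuity_2d_pt_id1
      | (apply c2_pow; apply continuity_2d_pt_minus; [apply c2_1 | apply c2_2]; apply cont_pt_of, A_cont)
      | (apply c2_2; apply cont_pt_of; auto) | (apply c2_1; apply cont_pt_of; auto)]. }
  assert (H := is_derive_RInt_param_bound_comp_aux3 f 0 (fun u => u) x 1).
  eapply isd_eq. apply H.
  - apply filter_forall. intros y. apply exRI. auto.
  - exists (mkposreal 1 Rlt_0_1). apply filter_forall. intros y. apply exRI. auto.
  - apply (is_derive_id (K := R_AbsRing)).
  - exists (mkposreal 1 Rlt_0_1). apply filter_forall. intros y t _. eexists. apply Hfd.
  - intros; apply Hd2.
  - exists (mkposreal 1 Rlt_0_1). intros; apply Hd2.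
  - apply cont_pt_of. auto.
  - unfold f. rewrite Rminus_diag. rewrite pow_i by lia. rewrite Rmult_0_r, Rmult_0_l, Rplus_0_r.
    rewrite (RInt_ext _ (fun t => scal (INR (S k) * F x) (F t * (t/4) * (Aint F x - Aint F t)^k))).
    + rewrite (RInt_scal (V := R_CompleteNormedModule)). unfold Pk, scal; simpl; unfold mult; simpl. ring.
      apply exRI. intros; cont; try apply A_cont; auto.
    + intros t _. apply eq_trans with (d x t). exact (HD x t). unfold d, scal; simpl; unfold mult; simpl. ring.
Qed.

End WithF.

Definition Qk (F : R -> R) k u := match k with
  | O => u / 4
  | S j => Pk F j u / (INR (fact (S j)) * INR (fact j)) end.

Lemma Qk_S F j u : Qk F (S j) u = Pk F j u / (INR (fact (S j)) * INR (fact j)).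
Proof. reflexivity. Qed.

Lemma isd_scal (f g : R -> R) x l c l' : is_derive f x l -> (forall t, g t = c * f t) -> l' = c * l ->
  is_derive g x l'.
Proof.
  intros H E ->. apply (is_derive_ext (fun t => c * f t)). intros; rewrite E; auto.
  apply is_derive_scal; auto.
Qed.

Lemma fact_INR_pos k : 0 < INR (fact k).
Proof. pose proof (fact_pos' k); lra. Qed.

Section WithF.
Variable F : R -> R.
Hypothesis HF : forall x, continuous F x.

Lemma Q0_deriv x : is_derive (Qk F 0) x (1/4).
Proof.
  apply (isd_scal (fun y => y) _ x 1 (/4)). apply (is_derive_id (K := R_AbsRing)).
  intros; simpl; unfold Rdiv; ring. unfold Rdiv; ring.
Qed.

Lemma Q_deriv k x : is_derive (Qk F (S k)) x (F x * Qk F k x / INR (S k)).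
Proof.
  destruct k.
  - apply (isd_scal (Pk F 0) _ x (F x * (x/4)) (/ (INR (fact 1) * INR (fact 0)))).
    apply P0_deriv; auto. intros; simpl; unfold Rdiv; ring.
    simpl. field.
  - apply (isd_scal (Pk F (S k)) _ x (INR (S k) * F x * Pk F k x) (/ (INR (fact (S (S k))) * INR (fact (S k))))).
    apply PS_deriv; auto. intros; rewrite Qk_S. unfold Rdiv; ring.
    rewrite Qk_S. rewrite (fact_simpl (S k)), (fact_simpl k), !mult_INR.
    pose proof (fact_INR_pos k). rewrite !S_INR. field.
    pose proof (pos_INR k). split; lra.
Qed.

Lemma Q_cont k x : continuous (Qk F k) x.
Proof.
  apply (ex_derive_continuous (K := R_AbsRing) (V := R_NormedModule)).
  destruct k; eexists. apply Q0_deriv. apply Q_deriv.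
Qed.

Lemma Q_zero k : Qk F k 0 = 0.
Proof. destruct k; simpl Qk. unfold Rdiv; ring. unfold Pk. rewrite RInt_point. unfold zero; simpl. unfold Rdiv; ring. Qed.

Lemma Q_int k u : RInt (fun t => F t * Qk F k t) 0 u = INR (S k) * Qk F (S k) u.
Proof.
  assert (H : is_RInt (fun t => F t * Qk F k t) 0 u (minus (INR (S k) * Qk F (S k) u) (INR (S k) * Qk F (S k) 0))).
  { apply (is_RInt_derive (fun y => INR (S k) * Qk F (S k) y)).
    - intros y _. apply (isd_scal (Qk F (S k)) _ y (F y * Qk F k y / INR (S k)) (INR (S k))). apply Q_deriv. intros; auto.
      pose proof (pos_INR k). rewrite S_INR. field. lra.
    - intros y _. apply cmul; auto. apply Q_cont. }
  apply (is_RInt_unique (V := R_CompleteNormedModule)) in H. rewrite H.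
  rewrite Q_zero. unfold minus, plus, opp; simpl. ring.
Qed.

Lemma Q_bound r : 0 <= r -> exists C D, 0 <= C /\ 1 <= D /\
  forall k x, Rabs x <= r -> Rabs (Qk F k x) <= C * (D ^ k / INR (fact k)).
Proof.
  intros Hr.
  destruct (cont_bound F HF r Hr) as [MF [HMF HMFb]].
  destruct (cont_bound (Aint F) (A_cont F HF) r Hr) as [MA [HMA HMAb]].
  exists (r / 4 + r * MF * (r / 4)), (2 * MA + 1).
  split. { apply Rplus_le_le_0_compat. lra. apply Rmult_le_pos; [apply Rmult_le_pos|]; lra. }
  split. lra.
  intros k x Hx. destruct k as [|j].
  - replace ((2 * MA + 1) ^ 0 / INR (fact 0)) with 1 by (simpl; field). rewrite Rmult_1_r. simpl Qk.
    assert (0 <= r * MF * (r / 4)) by (apply Rmult_le_pos; [apply Rmult_le_pos|]; lra).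
    split_Rabs; lra.
  - simpl Qk.
    assert (HP : Rabs (Pk F j x) <= r * (MF * (r / 4) * (2 * MA) ^ j)).
    { unfold Pk. eapply Rle_trans. apply (RInt_abs_bound _ 0 x (MF * (r / 4) * (2 * MA) ^ j)).
      - intros; cont; try apply A_cont; auto.
      - intros t Ht. assert (Htr : Rabs t <= r).
        { pose proof (between_abs 0 x t r Hx Ht). rewrite Rabs_R0 in H. lra. }
        assert (h1 : Rabs (F t) <= MF) by auto.
        assert (h2 : Rabs (t / 4) <= r / 4) by (split_Rabs; lra).
        assert (h3 : Rabs ((Aint F x - Aint F t) ^ j) <= (2 * MA) ^ j).
        { rewrite <- RPow_abs. apply pow_incr. split. apply Rabs_pos.
          unfold Rminus. eapply Rle_trans. apply Rabs_triang. rewrite Rabs_Ropp.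
          pose proof (HMAb x Hx). pose proof (HMAb t Htr). lra. }
        rewrite (Rabs_mult (F t * (t / 4))), (Rabs_mult (F t) (t / 4)).
        apply Rmult_le_compat; [apply Rmult_le_pos; apply Rabs_pos | apply Rabs_pos | | auto].
        apply Rmult_le_compat; try apply Rabs_pos; auto.
      - apply Rmult_le_compat_r.
        + apply Rmult_le_pos. apply Rmult_le_pos; lra. apply pow_le; lra.
        + rewrite Rminus_0_r. auto. }
    pose proof (fact_INR_pos (S j)) as Ha. pose proof (fact_pos' j) as Hb.
    set (a := INR (fact (S j))) in *. set (b := INR (fact j)) in *.
    assert (Hpow : (2 * MA) ^ j <= (2 * MA + 1) ^ S j).
    { apply Rle_trans with ((2*MA+1)^j). apply pow_incr; lra. simpl.
      rewrite <- (Rmult_1_l ((2*MA+1)^j)) at 1. apply Rmult_le_compat_r. apply pow_le; lra. lra. }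
    assert (HK : r*(MF*(r/4)*(2*MA)^j) <= (r/4 + r*MF*(r/4)) * (2*MA+1)^(S j)).
    { replace (r*(MF*(r/4)*(2*MA)^j)) with ((r*MF*(r/4)) * (2*MA)^j) by ring.
      assert (0 <= r*MF*(r/4)) by (apply Rmult_le_pos; [apply Rmult_le_pos|]; lra).
      apply Rmult_le_compat; auto. apply pow_le; lra. lra. }
    set (K := r*(MF*(r/4)*(2*MA)^j)) in *.
    set (C := r/4 + r*MF*(r/4)) in *. set (E := (2*MA+1)^(S j)) in *.
    assert (Hia : 0 < / a) by (apply Rinv_0_lt_compat; lra).
    assert (Hib : 0 < / b <= 1).
    { split. apply Rinv_0_lt_compat; lra. rewrite <- Rinv_1. apply Rinv_le_contravar; lra. }
    unfold Rdiv. change (INR (fact j + j * fact j)) with a. rewrite Rabs_mult, (Rabs_pos_eq (/ (a*b))).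
    2:{ left; apply Rinv_0_lt_compat; nra. }
    rewrite Rinv_mult.
    apply Rle_trans with (K * / a).
    { pose proof (Rabs_pos (Pk F j x)). set (p := Rabs (Pk F j x)) in *.
      assert (0 <= p * /a) by (apply Rmult_le_pos; lra).
      apply Rle_trans with (p * /a).
      - replace (p*(/a*/b)) with ((p*/a)*/b) by ring. rewrite <- (Rmult_1_r (p*/a)) at 2.
        apply Rmult_le_compat_l; lra.
      - apply Rmult_le_compat_r; lra. }
    rewrite <- Rmult_assoc. apply Rmult_le_compat_r; lra.
Qed.
End WithF.

Definition ak (c : R) (F : R -> R) (u : R) (k : nat) : R := c ^ k * Qk F k u.
Definition Phi c F u y := PSeries (ak c F u) y.
Definition Dy c F u y := PSeries (PS_derive (ak c F u)) y.

Lemma term_bound (c q y C D r : R) k : 0 <= C -> 0 <= D -> Rabs y <= r ->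
  Rabs q <= C * (D ^ k / INR (fact k)) ->
  Rabs (c ^ k * q * y ^ k) <= C * ((Rabs c * D * r) ^ k / INR (fact k)).
Proof.
  intros HC HD Hy Hq.
  rewrite !Rabs_mult, <- !RPow_abs.
  assert (Hyk : Rabs y ^ k <= r ^ k) by (apply pow_incr; split; [apply Rabs_pos|auto]).
  assert (Hck : 0 <= Rabs c ^ k) by (apply pow_le; apply Rabs_pos).
  replace (C * ((Rabs c * D * r) ^ k / INR (fact k))) with (Rabs c ^ k * (C * (D ^ k / INR (fact k))) * r ^ k)
    by (rewrite !Rpow_mult_distr; unfold Rdiv; ring).
  apply Rmult_le_compat; auto.
  - apply Rmult_le_pos; auto; apply Rabs_pos.
  - apply pow_le; apply Rabs_pos.
  - apply Rmult_le_compat_l; auto.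
Qed.

Lemma bnd_radius (a : nat -> R) : bnd (fun k y => a k * y ^ k) -> forall x, Rbar_lt (Rabs x) (CV_radius a).
Proof.
  intros Hb x.
  assert (Hr : 0 < Rabs x + 1) by (pose proof (Rabs_pos x); lra).
  destruct (Hb (Rabs x + 1) (Rlt_le _ _ Hr)) as [M [HM HMb]].
  pose (r := mkposreal _ Hr).
  assert (Mp := bnd_pos _ _ M (Rlt_le _ _ Hr) HMb).
  assert (Hcv : CVN_r (fun k y => a k * y ^ k) r).
  { exists M. exists (Series M). split.
    - assert (HS := Series_correct M HM).
      apply is_series_Reals in HS.
      intros eps Heps. destruct (HS eps Heps) as [N HN]. exists N. intros n Hn.
      specialize (HN n Hn). unfold R_dist in *.
      replace (sum_f_R0 (fun k => Rabs (M k)) n) with (sum_f_R0 M n); [exact HN|].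
      apply sum_eq. intros i _. rewrite Rabs_pos_eq; auto.
    - intros n y Hy. apply HMb. unfold Boule in Hy. simpl in Hy.
      rewrite Rminus_0_r in Hy. lra. }
  assert (H := CV_radius_Reals_1 a r Hcv).
  eapply Rbar_lt_le_trans; [|exact H]. simpl. lra.
Qed.

Section WithF.
Variable F : R -> R.
Hypothesis HF : forall x, continuous F x.
Variable c : R.

Lemma ak_bnd u : bnd (fun k y => ak c F u k * y ^ k).
Proof.
  intros r Hr. destruct (Q_bound F HF (Rabs u) (Rabs_pos u)) as [C [D [HC [HD HQ]]]].
  exists (fun k => C * ((Rabs c * D * r) ^ k / INR (fact k))). split.
  - apply ex_exp.
  - intros k y Hy. unfold ak. apply term_bound; auto. lra. apply HQ. lra.
Qed.

Lemma ak_rad u x : Rbar_lt (Rabs x) (CV_radius (ak c F u)).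
Proof. apply bnd_radius. apply ak_bnd. Qed.

Lemma akd_rad u x : Rbar_lt (Rabs x) (CV_radius (PS_derive (ak c F u))).
Proof. rewrite CV_radius_derive. apply ak_rad. Qed.

Lemma Phi_0 u : Phi c F u 0 = u / 4.
Proof. unfold Phi. rewrite PSeries_0. unfold ak. simpl. ring. Qed.

Lemma Phi_u0 y : Phi c F 0 y = 0.
Proof. unfold Phi, PSeries. transitivity (Series (fun _ => 0)); [|apply Series_zero].
  apply Series_ext. intros n. unfold ak. rewrite Q_zero; auto. ring. Qed.

Lemma Phi_cont u y : continuous (Phi c F u) y.
Proof. apply cont_of_pt. apply PSeries_continuity. apply ak_rad. Qed.

Lemma Dy_cont u y : continuous (Dy c F u) y.
Proof. apply cont_of_pt. apply PSeries_continuity. apply akd_rad. Qed.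

Lemma Phi_deriv u y : is_derive (Phi c F u) y (Dy c F u y).
Proof. apply is_derive_PSeries. apply ak_rad. Qed.

Lemma RInt_Dy u Y : RInt (Dy c F u) 0 Y = Phi c F u Y - u / 4.
Proof.
  assert (H : is_RInt (Dy c F u) 0 Y (minus (Phi c F u Y) (Phi c F u 0))).
  { apply (is_RInt_derive (Phi c F u)). intros; apply Phi_deriv. intros; apply Dy_cont. }
  apply (is_RInt_unique (V := R_CompleteNormedModule)) in H. rewrite H.
  rewrite Phi_0. unfold minus, plus, opp; simpl. ring.
Qed.

Lemma Phi_ex u y : ex_series (fun k => ak c F u k * y ^ k).
Proof. apply (S_ex (fun k y => ak c F u k * y ^ k)). apply ak_bnd. Qed.

End WithF.

Lemma hyp_term_bound w Z k : Rabs w <= Z ->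
  Rabs (w ^ k / (pochhammer 1 k * INR (fact k))) <= Z ^ k / INR (fact k).
Proof.
  intros Hw. rewrite poch1. pose proof (fact_pos' k) as Hf.
  unfold Rdiv. rewrite Rabs_mult, <- RPow_abs.
  rewrite (Rabs_pos_eq (/ _)) by (left; apply Rinv_0_lt_compat; nra).
  rewrite Rinv_mult.
  assert (Hz : Rabs w ^ k <= Z ^ k) by (apply pow_incr; split; [apply Rabs_pos|auto]).
  assert (0 <= Rabs w ^ k) by (apply pow_le; apply Rabs_pos).
  assert (0 < / INR (fact k)) by (apply Rinv_0_lt_compat; lra).
  assert (/ INR (fact k) <= 1) by (rewrite <- Rinv_1; apply Rinv_le_contravar; lra).
  apply Rle_trans with (Rabs w ^ k * / INR (fact k)).
  - rewrite <- Rmult_assoc. rewrite <- (Rmult_1_r (Rabs w ^ k * / INR (fact k))) at 2.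
    apply Rmult_le_compat_l. apply Rmult_le_pos; lra. lra.
  - apply Rmult_le_compat_r; lra.
Qed.

Lemma abs3 a b d A B D : Rabs a <= A -> Rabs b <= B -> Rabs d <= D ->
  Rabs (a * b * d) <= A * B * D.
Proof.
  intros. rewrite !Rabs_mult.
  pose proof (Rabs_pos a). pose proof (Rabs_pos b). pose proof (Rabs_pos d).
  apply Rmult_le_compat; try apply Rmult_le_compat; try apply Rmult_le_pos; auto.
Qed.

Section WithF.
Variable F : R -> R.
Hypothesis HF : forall x, continuous F x.
Variable c : R.
Hypothesis Hc : c <> 0.

Lemma inner_eq u X :
  RInt (fun u' => F u' * (u' / 4) * hyp0F1 1 (c * X * (Aint F u - Aint F u'))) 0 u = Dy c F u X / c.
Proof.
  pose (fn := fun k u' => F u' * (u' / 4) * ((c * X * (Aint F u - Aint F u')) ^ k / (pochhammer 1 k * INR (fact k)))).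
  transitivity (RInt (fun u' => Series (fun k => fn k u')) 0 u).
  { apply RInt_ext. intros x _. unfold hyp0F1, fn. rewrite Series_scal_l. reflexivity. }
  rewrite S_int.
  2:{ intros k x. unfold fn. cont; try apply A_cont; auto. }
  2:{ intros r Hr.
      destruct (cont_bound F HF r Hr) as [MF [HMF HMFb]].
      destruct (cont_bound (Aint F) (A_cont F HF) r Hr) as [MA [HMA HMAb]].
      exists (fun k => MF * (r / 4) * ((Rabs (c * X) * (Rabs (Aint F u) + MA)) ^ k / INR (fact k))). split.
      - apply (ex_exp (MF * (r/4))).
      - intros k x Hx. unfold fn. apply abs3; auto.
        + split_Rabs; lra.
        + apply hyp_term_bound. rewrite Rabs_mult. apply Rmult_le_compat_l. apply Rabs_pos.
          unfold Rminus. eapply Rle_trans. apply Rabs_triang. rewrite Rabs_Ropp.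
          pose proof (HMAb x Hx). lra. }
  unfold Dy, PSeries. unfold Rdiv. rewrite <- Series_scal_r.
  apply Series_ext. intros k.
  rewrite (RInt_ext _ (fun t => scal ((c * X) ^ k / (pochhammer 1 k * INR (fact k)))
       (F t * (t / 4) * (Aint F u - Aint F t) ^ k))).
  2:{ intros t _. unfold fn, scal; simpl; unfold mult; simpl. rewrite Rpow_mult_distr. unfold Rdiv. ring. }
  rewrite (RInt_scal (V := R_CompleteNormedModule)).
  2:{ apply exRI. intros; cont; try apply A_cont; auto. }
  unfold scal; simpl; unfold mult; simpl.
  change (RInt (fun t => F t * (t / 4) * (Aint F u - Aint F t) ^ k) 0 u) with (Pk F k u).
  unfold PS_derive, ak. rewrite Qk_S. rewrite poch1.
  rewrite fact_simpl, mult_INR. pose proof (fact_INR_pos k).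
  rewrite Rpow_mult_distr. simpl pow. rewrite S_INR. field.
  pose proof (pos_INR k). repeat split; lra.
Qed.

End WithF.

Lemma RInt_mono a k y : RInt (fun t => a * t ^ k) 0 y = a * (y ^ (S k) / INR (S k)).
Proof.
  assert (H : is_RInt (fun t => a * t ^ k) 0 y (minus (a * (y ^ (S k) / INR (S k))) (a * (0 ^ (S k) / INR (S k))))).
  { apply (is_RInt_derive (fun t => a * (t ^ (S k) / INR (S k)))).
    - intros x _. apply (isd_scal (fun t => t ^ S k) _ x (INR (S k) * 1 * x ^ pred (S k)) (a / INR (S k))).
      + apply is_derive_pow. apply (is_derive_id (K := R_AbsRing)).
      + intros; unfold Rdiv; ring.
      + simpl pred. pose proof (pos_INR k). rewrite S_INR. field. lra.
    - intros; cont. }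
  apply (is_RInt_unique (V := R_CompleteNormedModule)) in H. rewrite H.
  rewrite pow_i by lia. unfold minus, plus, opp; simpl. unfold Rdiv. ring.
Qed.

Section WithF.
Variable F : R -> R.
Hypothesis HF : forall x, continuous F x.
Variable c : R.

Lemma RInt_Phi u y : RInt (Phi c F u) 0 y = Series (fun k => ak c F u k * (y ^ (S k) / INR (S k))).
Proof.
  unfold Phi, PSeries.
  rewrite (S_int (fun k t => ak c F u k * t ^ k)).
  - apply Series_ext. intros k. apply RInt_mono.
  - intros; cont.
  - apply ak_bnd; auto.
Qed.

Lemma IE_Phi u y : Phi c F u y = u / 4 + c * RInt (fun u' => F u' * RInt (Phi c F u') 0 y) 0 u.
Proof.
  pose (fn := fun k u' => F u' * (ak c F u' k * (y ^ (S k) / INR (S k)))).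
  transitivity (u / 4 + c * RInt (fun u' => Series (fun k => fn k u')) 0 u).
  2:{ f_equal. f_equal. apply RInt_ext. intros x _. rewrite RInt_Phi. unfold fn. rewrite Series_scal_l. auto. }
  rewrite S_int.
  2:{ intros k x. unfold fn, ak. cont; try apply Q_cont; auto. }
  2:{ intros r Hr.
      destruct (cont_bound F HF r Hr) as [MF [HMF HMFb]].
      destruct (Q_bound F HF r Hr) as [C [D [HC [HD HQ]]]].
      exists (fun k => (MF * Rabs y * C) * ((Rabs c * D * Rabs y) ^ k / INR (fact k))). split.
      - apply ex_exp.
      - intros k x Hx. unfold fn, ak.
        replace (F x * (c ^ k * Qk F k x * (y ^ S k / INR (S k)))) with
          (F x * (c ^ k * Qk F k x * y ^ k) * (y / INR (S k))).
        2:{ simpl pow. field. pose proof (pos_INR k). rewrite S_INR. lra. }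
        replace (MF * Rabs y * C * ((Rabs c * D * Rabs y) ^ k / INR (fact k))) with
          (MF * (C * ((Rabs c * D * Rabs y) ^ k / INR (fact k))) * Rabs y) by ring.
        apply abs3; auto.
        + apply term_bound; auto. lra. lra.
        + pose proof (pos_INR k). rewrite S_INR. unfold Rdiv. rewrite Rabs_mult.
          rewrite (Rabs_pos_eq (/ _)) by (left; apply Rinv_0_lt_compat; lra).
          assert (/ (INR k + 1) <= 1) by (rewrite <- Rinv_1; apply Rinv_le_contravar; lra).
          pose proof (Rabs_pos y).
          rewrite <- (Rmult_1_r (Rabs y)) at 2. apply Rmult_le_compat_l; lra. }
  unfold Phi, PSeries. rewrite Series_incr_1 by (apply Phi_ex; auto).
  rewrite <- Series_scal_l.
  unfold ak at 1. simpl Qk. simpl pow. f_equal. ring.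
  apply Series_ext. intros k.
  assert (Hm : INR (S k) <> 0) by (pose proof (pos_INR k); rewrite S_INR; lra).
  set (m := INR (S k)) in *.
  rewrite (RInt_ext _ (fun t => scal (c ^ k * (y ^ (S k) / m)) (F t * Qk F k t))).
  2:{ intros t _. unfold fn. cbv beta. fold m. unfold ak, scal; simpl; unfold mult; simpl. ring. }
  rewrite (RInt_scal (V := R_CompleteNormedModule)).
  2:{ apply exRI. intros; cont; try apply Q_cont; auto. }
  unfold scal; simpl; unfold mult; simpl. rewrite Q_int; auto.
  unfold ak. simpl pow. fold m. field. auto.
Qed.

End WithF.

Section WithF.
Variable F : R -> R.
Hypothesis HF : forall x, continuous F x.
Variable c : R.

Lemma Dy_deriv_u u Y : is_derive (fun u' => Dy c F u' Y) u (c * F u * Phi c F u Y).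
Proof.
  pose (fn := fun k u' => INR (S k) * (c ^ (S k) * Qk F (S k) u') * Y ^ k).
  pose (dfn := fun k u' => INR (S k) * (c ^ (S k) * (F u' * Qk F k u' / INR (S k))) * Y ^ k).
  assert (HS := S_deriv fn dfn).
  eapply isd_eq. apply (is_derive_ext (fun u' => Series (fun k => fn k u'))).
  { intros t. reflexivity. }
  apply HS.
  - intros k x. unfold fn, dfn.
    apply (isd_scal (Qk F (S k)) _ x (F x * Qk F k x / INR (S k)) (INR (S k) * c ^ (S k) * Y ^ k)).
    apply Q_deriv; auto. intros; ring. ring.
  - intros k x. unfold dfn. cont; try apply Q_cont; auto.
  - intros r Hr. destruct (Q_bound F HF r Hr) as [C [D [HC [HD HQ]]]].
    exists (fun k => (Rabs c * C * D) * ((Rabs c * D * Rabs Y) ^ k / INR (fact k))). split.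
    + apply ex_exp.
    + intros k x Hx. unfold fn.
      replace (INR (S k) * (c ^ S k * Qk F (S k) x) * Y ^ k) with
        (c ^ k * (INR (S k) * c * Qk F (S k) x) * Y ^ k) by (simpl pow; ring).
      apply term_bound; [|lra|apply Rle_refl|].
      * apply Rmult_le_pos; [apply Rmult_le_pos|]; auto. apply Rabs_pos. lra.
      * pose proof (HQ (S k) x Hx) as H1.
        rewrite !Rabs_mult. rewrite (Rabs_pos_eq (INR (S k))) by apply pos_INR.
        rewrite fact_simpl, mult_INR in H1. pose proof (fact_INR_pos k).
        assert (HSk : 0 < INR (S k)) by (apply lt_0_INR; lia).
        replace (Rabs c * C * D * (D ^ k / INR (fact k))) with
          (Rabs c * (INR (S k) * (C * (D ^ S k / (INR (S k) * INR (fact k)))))).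
        2:{ simpl pow. field. lra. }
        replace (INR (S k) * Rabs c * Rabs (Qk F (S k) x)) with (Rabs c * (INR (S k) * Rabs (Qk F (S k) x))) by ring.
        apply Rmult_le_compat_l. apply Rabs_pos.
        apply Rmult_le_compat_l. lra. auto.
  - intros r Hr. destruct (Q_bound F HF r Hr) as [C [D [HC [HD HQ]]]].
    destruct (cont_bound F HF r Hr) as [MF [HMF HMFb]].
    exists (fun k => (Rabs c * MF * C) * ((Rabs c * D * Rabs Y) ^ k / INR (fact k))). split.
    + apply ex_exp.
    + intros k x Hx. unfold dfn.
      assert (HSk : 0 < INR (S k)) by (apply lt_0_INR; lia).
      replace (INR (S k) * (c ^ S k * (F x * Qk F k x / INR (S k))) * Y ^ k) with
        (c ^ k * (c * F x * Qk F k x) * Y ^ k) by (simpl pow; field; lra).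
      apply term_bound; [|lra|apply Rle_refl|].
      * apply Rmult_le_pos; [apply Rmult_le_pos|]; auto. apply Rabs_pos.
      * rewrite !Rabs_mult. rewrite Rmult_assoc.
        replace (Rabs c * MF * C * (D ^ k / INR (fact k))) with (Rabs c * (MF * (C * (D ^ k / INR (fact k))))) by ring.
        apply Rmult_le_compat_l. apply Rabs_pos.
        apply Rmult_le_compat; auto. apply Rabs_pos. apply Rabs_pos.
  - unfold Phi, PSeries. rewrite <- !Series_scal_l. apply Series_ext. intros k.
    unfold dfn, ak. assert (HSk : 0 < INR (S k)) by (apply lt_0_INR; lia).
    simpl pow. field. lra.
Qed.

End WithF.

Lemma T_eq (c : R) (F G : R -> R) (HF : forall x, continuous F x) (HG : forall x, continuous G x)
  (Hc : c <> 0) u v :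
  u / 4 + c * RInt (fun v' => G v' *
      RInt (fun u' => F u' * (u' / 4) * hyp0F1 1 (c * tildeI G v v' * tildeI F u u')) 0 u) 0 v
  = Phi c F u (Aint G v).
Proof.
  set (B := Aint G).
  transitivity (u / 4 + c * RInt (fun v' => G v' * (Dy c F u (B v - B v') / c)) 0 v).
  { f_equal. f_equal. apply RInt_ext. intros v' _. f_equal. unfold tildeI.
    rewrite <- (inner_eq F HF c Hc u (B v - B v')). apply RInt_ext. intros u' _.
    rewrite (A_diff G HG v v'), (A_diff F HF u u'). reflexivity. }
  assert (HcD : forall y, continuous (fun v' => G v' * Dy c F u (B v - B v')) y).
  { intros y. apply cmul; auto. apply (continuous_comp (fun v' => B v - B v') (Dy c F u)).
    apply cminus. apply cconst. apply A_cont; auto. apply Dy_cont; auto. }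
  rewrite (RInt_ext _ (fun v' => scal (/ c) (G v' * Dy c F u (B v - B v')))).
  2:{ intros; unfold scal; simpl; unfold mult; simpl. unfold Rdiv. ring. }
  rewrite (RInt_scal (V := R_CompleteNormedModule)) by (apply exRI; auto).
  unfold scal; simpl; unfold mult; simpl.
  rewrite <- Rmult_assoc, Rinv_r, Rmult_1_l by auto.
  assert (HB0 : B 0 = 0) by (unfold B, Aint; rewrite RInt_point; reflexivity).
  assert (Hsub : RInt (fun y => - G y * Dy c F u (B v - B y)) 0 v = RInt (Dy c F u) (B v - B 0) (B v - B v)).
  { apply (RInt_comp (V := R_CompleteNormedModule) (Dy c F u) (fun y => B v - B y) (fun y => - G y) 0 v).
    - intros; apply Dy_cont; auto.
    - intros x _. split.
      + apply (is_derive_ext (fun y => minus (B v) (B y))). intros; reflexivity.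
        eapply isd_eq. apply (is_derive_minus (fun _ => B v) B). apply (is_derive_const (K := R_AbsRing) (V := R_NormedModule)).
        apply A_deriv; auto. unfold minus, plus, opp, zero; simpl. ring.
      + apply copp; auto. }
  assert (Hneg : RInt (fun y => - G y * Dy c F u (B v - B y)) 0 v = - RInt (fun y => G y * Dy c F u (B v - B y)) 0 v).
  { rewrite (RInt_ext _ (fun y => scal (-1) (G y * Dy c F u (B v - B y)))).
    2:{ intros; unfold scal; simpl; unfold mult; simpl. ring. }
    rewrite (RInt_scal (V := R_CompleteNormedModule)) by (apply exRI; auto).
    unfold scal; simpl; unfold mult; simpl. ring. }
  rewrite HB0, Rminus_0_r, Rminus_diag in Hsub.
  rewrite <- (opp_RInt_swap (V := R_CompleteNormedModule) (Dy c F u) 0 (B v)) in Hsub by (apply exRI; intros; apply Dy_cont; auto).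
  unfold opp in Hsub; simpl in Hsub. pose proof (RInt_Dy F HF c u (B v)) as HR.
  rewrite Hneg in Hsub. rewrite HR in Hsub. lra.
Qed.

Theorem mainTheorem1 (mu hbar : R) (V F G : R -> R) :
  0 < mu -> 0 < hbar ->
  (forall x, continuous F x) -> (forall x, continuous G x) ->
  (forall u v, V ((u + v) / 2) - V ((u - v) / 2) = F u * G v) ->
  let T := T_S mu hbar F G in
  (* integral equation *)
  (forall u v,
     T u v = u / 4 + mu / (2 * hbar ^ 2) *
       RInt (fun u' => RInt (fun v' => F u' * G v' * T u' v') 0 v) 0 u) /\
  (* time kernel equation: mixed partial derivative d/du (d/dv T) exists and *)
  (forall u v,
     ex_derive (fun v' => T u v') v /\
     exists d : R,
       is_derive (fun u' => Derive (fun v' => T u' v') v) u d /\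
       - (2 * hbar ^ 2 / mu) * d
         + (V ((u + v) / 2) - V ((u - v) / 2)) * T u v = 0) /\
  (* boundary conditions *)
  (forall u, T u 0 = u / 4) /\
  (forall v, T 0 v = 0).
Proof.
  intros Hmu Hh HF HG HV T.
  assert (Hh2 : 0 < hbar ^ 2) by (apply pow_lt; lra).
  assert (Hc : mu / (2 * hbar ^ 2) <> 0).
  { apply Rgt_not_eq. unfold Rdiv. apply Rmult_lt_0_compat; auto. apply Rinv_0_lt_compat. lra. }
  set (c := mu / (2 * hbar ^ 2)) in *.
  set (B := Aint G).
  assert (HT : forall u v, T u v = Phi c F u (B v)).
  { intros u v. unfold T, T_S. fold c. apply T_eq; auto. }
  assert (HB0 : B 0 = 0) by (unfold B, Aint; rewrite RInt_point; reflexivity).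
  assert (Hdv : forall u' v, is_derive (fun v' => T u' v') v (G v * Dy c F u' (B v))).
  { intros u' v. apply (is_derive_ext (fun v' => Phi c F u' (B v'))). intros; rewrite HT; auto.
    apply (is_derive_comp (Phi c F u') B v). apply Phi_deriv; auto. apply A_deriv; auto. }
  split; [|split; [|split]].
  - intros u v. rewrite HT. rewrite IE_Phi; auto. f_equal. f_equal.
    apply RInt_ext. intros u' _.
    assert (Hs : RInt (fun y => G y * Phi c F u' (B y)) 0 v = RInt (Phi c F u') (B 0) (B v)).
    { apply (RInt_comp (V := R_CompleteNormedModule) (Phi c F u') B G 0 v).
      - intros; apply Phi_cont; auto.
      - intros; split. apply A_deriv; auto. auto. }
    rewrite HB0 in Hs. rewrite <- Hs.
    rewrite (RInt_ext (fun v' => F u' * G v' * T u' v') (fun v' => scal (F u') (G v' * Phi c F u' (B v')))).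
    2:{ intros; rewrite HT. unfold scal; simpl; unfold mult; simpl. ring. }
    rewrite (RInt_scal (V := R_CompleteNormedModule)).
    2:{ apply exRI. intros; apply cmul; auto. apply (continuous_comp B (Phi c F u')).
        apply A_cont; auto. apply Phi_cont; auto. }
    reflexivity.
  - intros u v. split. eexists; apply Hdv.
    exists (G v * (c * F u * Phi c F u (B v))). split.
    + apply (is_derive_ext (fun u' => G v * Dy c F u' (B v))).
      { intros t. symmetry. apply is_derive_unique. apply Hdv. }
      apply is_derive_scal. apply Dy_deriv_u; auto.
    + rewrite HV, HT. unfold c. field. lra.
  - intros u. rewrite HT, HB0. apply Phi_0.
  - intros v. rewrite HT. apply Phi_u0; auto.
Qed.
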